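(* Let $\mathcal{C}$ be a clutter and let $A$ be the $n\times s$ matrix with columns $v_1,\ldots,v_s$. If $f=t^{a^+}-t^{a^-}$ is a nonzero homogeneous binomial in $I(X)$ with $\deg(f)\leq q-2$, where $a\in\mathbb{Z}^s$ and $a^+,a^-\in\mathbb{N}^s$ are its positive and negative parts ($a=a^+-a^-$ with disjoint supports), then $f\in I_\mathcal{A}$, i.e. $Aa^+=Aa^-$.
   Context: Let $K=\mathbb{F}_q$ be a finite field with $q\neq 2$ elements. A clutter $\mathcal{C}$ with vertex set $\{y_1,\ldots,y_n\}$ is a family of subsets (edges) of this set such that no edge is contained in another; let its edges be $f_1,\ldots,f_s$ ($s\geq 2$) with characteristic vectors $v_i=\sum_{y_j\in f_i}e_j\in\{0,1\}^n$, and $\mathcal{A}=\{v_1,\ldots,v_s\}$. For $x\in K^n$ write $x^{v_i}=\prod_j x_j^{v_{ij}}$. Let $X=\{[(x^{v_1},\ldots,x^{v_s})]\in\mathbb{P}^{s-1}: x\in (K^* )^n\}$, let $S=K[t_1,\ldots,t_s]$ with the standard grading, and let $I(X)$ be the ideal of $S$ generated by the homogeneous polynomials vanishing on $X$. The toric ideal is $I_\mathcal{A}=(t^a-t^b: a,b\in\mathbb{N}^s,\ \sum_i a_iv_i=\sum_i b_iv_i)\subset S$. *)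

(* Defs.v *)
From HB Require Import structures.
From mathcomp Require Import all_boot all_order all_algebra.
Set Implicit Arguments. Unset Strict Implicit. Unset Printing Implicit Defensive.
Import GRing.Theory.
Local Open Scope ring_scope.

Definition is_clutter (n s : nat) (E : 'I_s -> {set 'I_n}) : Prop :=
  forall i j : 'I_s, i != j -> ~~ (E i \subset E j).

Definition charvec (n s : nat) (E : 'I_s -> {set 'I_n}) (i : 'I_s) (j : 'I_n) : nat :=
  (j \in E i).

Definition xpow (K : fieldType) (n : nat) (x : 'I_n -> K) (v : 'I_n -> nat) : K :=
  \prod_(j < n) x j ^+ v j.

Definition param_point (K : fieldType) (n s : nat) (E : 'I_s -> {set 'I_n})
  (x : 'I_n -> K) : 'I_s -> K :=
  fun i => xpow x (charvec E i).

Definition monom_eval (K : fieldType) (s : nat) (y : 'I_s -> K) (a : 'I_s -> nat) : K :=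
  \prod_(i < s) y i ^+ a i.

(* the homogeneous binomial t^ap - t^am lies in I(X), i.e. vanishes at every
   point of X (every representative (x^{v_1},...,x^{v_s}), x in (K^* )^n). *)
Definition binom_in_IX (K : fieldType) (n s : nat) (E : 'I_s -> {set 'I_n})
  (ap am : 'I_s -> nat) : Prop :=
  forall x : 'I_n -> K, (forall j, x j != 0) ->
    monom_eval (param_point E x) ap - monom_eval (param_point E x) am = 0.

(* Main.v *)
Require Import Defs.
From HB Require Import structures.
From mathcomp Require Import all_boot all_order all_algebra.
From mathcomp Require Import zify.
Local Open Scope ring_scope.
Import GRing.Theory.

Lemma pow_inj_aux (K : finFieldType) (a b : nat) :
  (a <= b)%N -> (b <= #|K| - 2)%N ->
  (forall l : K, l != 0 -> l ^+ a = l ^+ b) -> a = b.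
Proof.
move=> ab bK H.
have {}H (l : K) : l != 0 -> l ^+ (b - a) = 1.
  move=> l0; have := H l l0; rewrite -{1}(subnKC ab) exprD.
  by rewrite -{1}[l ^+ a]mulr1 => /mulfI -> //; rewrite expf_neq0.
case: (posnP (b - a)) => [/eqP|k0].
  by rewrite subn_eq0 => ba; apply/eqP; rewrite eqn_leq ab ba.
have := @max_unity_roots K (b - a) (enum (predC1 (0 : K))) k0.
rewrite enum_uniq -cardE cardC1.
have -> : all (b - a).-unity_root (enum (predC1 (0:K))).
  apply/allP => x; rewrite mem_enum /= => x0.
  by rewrite unity_rootE H.
move=> /(_ isT isT) => le.
have K2 : (2 <= #|K|)%N.
  rewrite (cardD1 0) (cardD1 1) !inE oner_neq0 //.
have : (#|K|.-1 <= #|K| - 2)%N by apply: leq_trans le (leq_trans (leq_subr _ _) bK).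
move: K2; clear; lia.
Qed.

Theorem proposition4p2 (K : finFieldType) (q n s : nat)
  (E : 'I_s -> {set 'I_n}) (ap am : 'I_s -> nat) :
  #|K| = q -> q != 2%N ->
  (2 <= s)%N ->
  is_clutter E ->
  (* a^+ and a^- have disjoint supports *)
  (forall i, ap i = 0%N \/ am i = 0%N) ->
  (* f = t^{a^+} - t^{a^-} is nonzero *)
  ap <> am ->
  (* f is homogeneous *)
  (\sum_(i < s) ap i = \sum_(i < s) am i)%N ->
  (* deg f <= q - 2 *)
  (\sum_(i < s) ap i <= q - 2)%N ->
  binom_in_IX K E ap am ->
  (* A a^+ = A a^- *)
  forall j : 'I_n,
    (\sum_(i < s) charvec E i j * ap i = \sum_(i < s) charvec E i j * am i)%N.
Proof.
move=> Kq _ _ _ _ _ hom deg HX j.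
pose D (a : 'I_s -> nat) := (\sum_(i < s) charvec E i j * a i)%N.
have DL a : (D a <= \sum_(i < s) a i)%N.
  apply: leq_sum => i _; rewrite /charvec; case: (j \in E i) => //=.
  by rewrite mul1n. 
have Hl (l : K) : l != 0 -> l ^+ D ap = l ^+ D am.
  move=> l0.
  pose x := fun k : 'I_n => if k == j then l else 1.
  have x0 k : x k != 0 by rewrite /x; case: (k == j) => //; exact: oner_neq0.
  have := HX x x0; move/eqP; rewrite subr_eq0 => /eqP.
  have PP i : param_point E x i = l ^+ charvec E i j.
    rewrite /param_point /xpow (bigD1 j) //= big1 ?mulr1.
      by rewrite /x eqxx.
    by move=> k kj; rewrite /x (negbTE kj) expr1n.
  rewrite /monom_eval; under eq_bigr do rewrite PP -exprM.
  under [in X in _ = X -> _]eq_bigr do rewrite PP -exprM.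
  by rewrite !prodrXr.
have bA : (D ap <= #|K| - 2)%N by rewrite Kq; apply: leq_trans (DL ap) deg.
have bB : (D am <= #|K| - 2)%N by rewrite Kq; rewrite hom in deg; apply: leq_trans (DL am) deg.
case: (leqP (D ap) (D am)) => h.
  exact: (@pow_inj_aux K (D ap) (D am) h bB Hl).
apply/esym; apply: (@pow_inj_aux K (D am) (D ap) (ltnW h) bA) => l l0; by rewrite Hl.
Qed.
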